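(* Let $\varepsilon\in(0,1)$. Let $M=(E,\mathcal{I})$ be a matroid, $u:E\to\mathbb{Z}_{\ge0}$ integer capacities and $k\in\mathbb{N}$. Suppose bases $B_1,\dots,B_k$ (with insertion levels) and levels $\ell:E\to\mathbb{Z}_{\ge0}$ satisfy invariants (I1)–(I3) with height $h>1/\varepsilon+2$. Then there exists a level $j$ such that $$u(E_{<j})+k\,\mathrm{rank}(E_{\ge j})\ \le\ (1+\varepsilon)\sum_{e\in E}\min\{u(e),x(e)\}.$$ Consequently $B_1,\dots,B_k$ is a $1/(1+\varepsilon)$-approximately maximum solution of the $k$-fold matroid union problem and $E_{\ge j}$ is a $(1+\varepsilon)$-approximately minimum dual solution.
   Context: For $e\in E$, $x(e)=|\{i: e\in B_i\}|$; $e$ is uncovered if $x(e)<u(e)$. $u(T)=\sum_{e\in T}u(e)$. The $k$-fold matroid union problem maximizes $\sum_e\min\{u(e),x(e)\}$ over $k$ bases; the dual minimizes $k\,\mathrm{rank}(S)+u(E\setminus S)$ over $S\subseteq E$. Each element $e\in B_i$ carries an insertion level (the value of $\ell(e)$ when $e$ was inserted into $B_i$; levels never decrease, so insertion levels are at most current levels). $E_j=\{e:\ell(e)=j\}$ and analogously $E_{<j},E_{\ge j},E_{>j}$; $B_{i,j}$ (resp. $B_{i,\ge j}$) denotes the elements of $B_i$ with insertion level $j$ (resp. at least $j$). Invariants: (I1) $\ell(e)=0$ whenever $e$ lies in strictly more than $u(e)$ bases; (I2) for all $i$ and $j$, $B_{i,\ge j}$ spans $E_{>j}$; (I3) every uncovered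 $e$ has $\ell(e)\ge h$. *)

(* Defs.v *)
From mathcomp Require Import all_boot all_order all_algebra.
Set Implicit Arguments. Unset Strict Implicit. Unset Printing Implicit Defensive.
Import Order.TTheory GRing.Theory Num.Theory.

Definition is_matroid (T : finType) (indep : {set T} -> bool) : Prop :=
  [/\ indep set0,
      (forall I J : {set T}, J \subset I -> indep I -> indep J) &
      (forall I J : {set T}, indep I -> indep J -> #|I| < #|J| ->
         exists2 x, x \in J :\: I & indep (x |: I))].

Definition mrank (T : finType) (indep : {set T} -> bool) (S : {set T}) : nat :=
  \max_(I : {set T} | indep I && (I \subset S)) #|I|.

Definition is_basis (T : finType) (indep : {set T} -> bool) (B : {set T}) : bool :=
  indep B && [forall e, (e \notin B) ==> ~~ indep (e |: B)].

Definition mclosure (T : finType) (indep : {set T} -> bool) (A : {set T}) : {set T} :=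
  [set e | mrank indep (e |: A) == mrank indep A].

Definition spans (T : finType) (indep : {set T} -> bool) (A X : {set T}) : bool :=
  X \subset mclosure indep A.

Definition xcount (T : finType) (k : nat) (B : 'I_k -> {set T}) (e : T) : nat :=
  #|[set i | e \in B i]|.

Definition usum (T : finType) (u : T -> nat) (S : {set T}) : nat :=
  \sum_(e in S) u e.

Definition union_value (T : finType) (k : nat) (u : T -> nat)
  (B : 'I_k -> {set T}) : nat :=
  \sum_(e : T) minn (u e) (xcount B e).

Definition dual_value (T : finType) (indep : {set T} -> bool) (k : nat)
  (u : T -> nat) (S : {set T}) : nat :=
  k * mrank indep S + usum u (~: S).

Definition Elt (T : finType) (l : T -> nat) (j : nat) : {set T} := [set e | l e < j].
Definition Ege (T : finType) (l : T -> nat) (j : nat) : {set T} := [set e | j <= l e].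
Definition Egt (T : finType) (l : T -> nat) (j : nat) : {set T} := [set e | j < l e].

Definition Bge (T : finType) (k : nat) (B : 'I_k -> {set T})
  (ins : 'I_k -> T -> nat) (i : 'I_k) (j : nat) : {set T} :=
  [set e in B i | j <= ins i e].

Definition inv_I1 (T : finType) (k : nat) (u : T -> nat) (B : 'I_k -> {set T})
  (l : T -> nat) : Prop :=
  forall e, u e < xcount B e -> l e = 0.

Definition inv_I2 (T : finType) (indep : {set T} -> bool) (k : nat)
  (B : 'I_k -> {set T}) (ins : 'I_k -> T -> nat) (l : T -> nat) : Prop :=
  forall (i : 'I_k) (j : nat), spans indep (Bge B ins i j) (Egt l j).

Definition inv_I3 (T : finType) (k : nat) (u : T -> nat) (B : 'I_k -> {set T})
  (l : T -> nat) (h : nat) : Prop :=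
  forall e, xcount B e < u e -> h <= l e.

(* Main.v *)
Require Import Defs.
From mathcomp Require Import all_boot all_order all_algebra.
From mathcomp Require Import zify ring lra.
Import Order.TTheory GRing.Theory Num.Theory.
Set Implicit Arguments.

Lemma mrank_ge (T : finType) (indep : {set T} -> bool) (I S : {set T}) :
  indep I -> I \subset S -> (#|I| <= mrank indep S)%N.
Proof.
move=> hI hS; rewrite /mrank.
by apply: (leq_bigmax_cond (F := fun I : {set T} => #|I|)); rewrite hI hS.
Qed.

Lemma mrank_le_card (T : finType) (indep : {set T} -> bool) (A : {set T}) :
  (mrank indep A <= #|A|)%N.
Proof. by apply/bigmax_leqP => I /andP[_ sub]; exact: subset_leq_card. Qed.

Lemma rank_le_span (T : finType) (indep : {set T} -> bool) (A X : {set T}) :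
  is_matroid indep -> indep A -> spans indep A X -> (mrank indep X <= #|A|)%N.
Proof.
case=> _ _ aug indA sp.
apply/bigmax_leqP => I /andP[indI sub].
rewrite leqNgt; apply/negP => lt.
have [x /setDP[xI xA] indxA] := aug A I indA indI lt.
have xX : x \in X := subsetP sub x xI.
have := subsetP sp x xX; rewrite inE => /eqP eqr.
have h1 := @mrank_le_card _ indep A.
have h2 : (#|x |: A| <= mrank indep (x |: A))%N by apply: mrank_ge.
move: h2; rewrite cardsU1 xA eqr add1n => h2.
by move: (leq_trans h2 h1); rewrite ltnn.
Qed.

Lemma double_count (T : finType) (k : nat) (F : 'I_k -> {set T}) (P : pred T) :
  (\sum_(e | P e) #|[set i | e \in F i]| = \sum_i #|[set e in F i | P e]|)%N.
Proof.
transitivity (\sum_(e | P e) \sum_(i | e \in F i) 1)%N.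
  by apply: eq_bigr => e _; rewrite -sum1_card; apply: eq_bigl => i; rewrite inE.
rewrite (exchange_big_dep xpredT) //=.
by apply: eq_bigr => i _; rewrite -sum1_card; apply: eq_bigl => e; rewrite !inE andbC.
Qed.

Lemma double_count0 (T : finType) (k : nat) (F : 'I_k -> {set T}) :
  (\sum_e #|[set i | e \in F i]| = \sum_i #|F i|)%N.
Proof.
transitivity (\sum_e \sum_(i | e \in F i) 1)%N.
  by apply: eq_bigr => e _; rewrite -sum1_card; apply: eq_bigl => i; rewrite inE.
rewrite (exchange_big_dep xpredT) //=.
by apply: eq_bigr => i _; rewrite -sum1_card; apply: eq_bigl => e.
Qed.

Lemma sum_const_k (k c : nat) : (\sum_(i < k) c = k * c)%N.
Proof. by rewrite big_const_ord iter_addn_0 mulnC. Qed.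

Lemma weak_duality (T : finType) (indep : {set T} -> bool) (k : nat) (u : T -> nat)
  (B' : 'I_k -> {set T}) (S : {set T}) :
  is_matroid indep -> (forall i, is_basis indep (B' i)) ->
  (union_value u B' <= dual_value indep k u S)%N.
Proof.
case=> _ hered _ hB.
rewrite /union_value /dual_value /usum (bigID (mem S)) /=.
apply: leq_add.
- apply: (@leq_trans (\sum_(e | e \in S) xcount B' e)).
    by apply: leq_sum => e _; exact: geq_minr.
  rewrite /xcount (double_count B' (mem S)) -sum_const_k.
  apply: leq_sum => i _; apply: mrank_ge.
    case/andP: (hB i) => hi _; apply: (hered (B' i)) => //.
    by apply/subsetP => e; rewrite inE => /andP[].
  by apply/subsetP => e; rewrite inE => /andP[].
- apply: (@leq_trans (\sum_(e | e \notin S) u e)).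
    by apply: leq_sum => e _; exact: geq_minl.
  by rewrite (eq_bigl (fun e => e \in ~: S)) // => e; rewrite inE.
Qed.

Lemma split_lt (T : finType) (l : T -> nat) (m : T -> nat) (n : nat) :
  (\sum_(e | l e < n.+1) m e = \sum_(e | l e < n) m e + \sum_(e | l e == n) m e)%N.
Proof.
rewrite (bigID (fun e => l e < n)) /=.
congr (_ + _); apply: eq_bigl => e; lia.
Qed.

Lemma sum_g (T : finType) (l : T -> nat) (m : T -> nat) (n : nat) :
  (\sum_(t < n) \sum_(e | l e == t) m e = \sum_(e | l e < n) m e)%N.
Proof.
elim: n => [|n IH].
  by rewrite big_ord0 big_pred0 // => e; rewrite ltn0.
by rewrite big_ord_recr /= IH split_lt.
Qed.

Lemma main_nat (T : finType) (indep : {set T} -> bool) (u : T -> nat) (k : nat)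
  (B : 'I_k -> {set T}) (ins : 'I_k -> T -> nat) (l : T -> nat) (h : nat) :
  is_matroid indep -> (forall i, is_basis indep (B i)) ->
  (forall i e, e \in B i -> (ins i e <= l e)%N) ->
  inv_I1 u B l -> inv_I2 indep B ins l -> inv_I3 u B l h -> (1 < h)%N ->
  exists t, [/\ (0 < t)%N, (t < h)%N,
    (h.-1 * \sum_(e | l e == t) minn (u e) (xcount B e) <= union_value u B)%N &
    (usum u (Elt l t.+1) + k * mrank indep (Ege l t.+1) <=
       union_value u B + \sum_(e | l e == t) minn (u e) (xcount B e))%N].
Proof.
move=> hM hB hins hI1 hI2 hI3 h1.
set m := fun e => minn (u e) (xcount B e).
set g := fun t => (\sum_(e | l e == t) m e)%N.
have hP : union_value u B = (\sum_e m e)%N by [].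
have hbound : forall t, (0 < t)%N -> (t < h)%N ->
    (usum u (Elt l t.+1) + k * mrank indep (Ege l t.+1) <= union_value u B + g t)%N.
  move=> t t0 th.
  have E1 : usum u (Elt l t.+1) = (\sum_(e | l e < t.+1) m e)%N.
    rewrite /usum; apply: eq_big => e; first by rewrite inE.
    move=> hl; rewrite inE in hl; rewrite /m; apply/esym/minn_idPl; rewrite leqNgt; apply/negP => /hI3.
    lia.
  have E2 : (k * mrank indep (Ege l t.+1) <= \sum_i #|Bge B ins i t|)%N.
    rewrite -sum_const_k; apply: leq_sum => i _.
    apply: rank_le_span => //.
    case: hM => _ hered _; case/andP: (hB i) => hi _; apply: (hered (B i)) => //.
    by apply/subsetP => e; rewrite inE => /andP[].
  have E3 : (\sum_i #|Bge B ins i t| <= \sum_(e | t <= l e) m e)%N.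
    rewrite -double_count0 [X in (_ <= X)%N]big_mkcond /=.
    apply: leq_sum => e _; case: ifP => hle.
      have -> : m e = xcount B e.
        rewrite /m; apply/minn_idPr; rewrite leqNgt; apply/negP => /hI1; lia.
      by apply: subset_leq_card; apply/subsetP => i; rewrite !inE => /andP[].
    rewrite leqn0 cards_eq0; apply/eqP/setP => i; rewrite !inE.
    apply/negbTE/negP => /andP[eB ti]; have := hins i e eB; lia.
  have E4 : union_value u B = (\sum_(e | l e < t) m e + \sum_(e | t <= l e) m e)%N.
    rewrite hP (bigID (fun e => l e < t)) /=; congr (_ + _).
    by apply: eq_bigl => e; rewrite -leqNgt.
  rewrite E1 split_lt E4 -/(g t).
  have := leq_trans E2 E3; lia.
have hsum : (\sum_(t < h) g t <= union_value u B)%N.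
  rewrite /g sum_g hP [X in (_ <= X)%N](bigID (fun e => l e < h)) /=.
  exact: leq_addr.
case: h h1 hI3 hbound hsum => [//|h'] h1 hI3 hbound hsum.
case: (boolP [exists t : 'I_h', h' * g t.+1 <= union_value u B]%N).
  case/existsP => t ht; exists t.+1; split => //.
    by rewrite ltnS ltn_ord.
  by apply: hbound => //; rewrite ltnS ltn_ord.
move/existsPn => H; exfalso.
have A1 : (h' * (union_value u B).+1 <= \sum_(t < h') h' * g t.+1)%N.
  rewrite -sum_const_k; apply: leq_sum => t _.
  by move: (H t); rewrite -ltnNge.
move: hsum; rewrite big_ord_recl /= => hsum.
have A2 : (\sum_(t < h') h' * g t.+1 = h' * \sum_(t < h') g (bump 0 t))%N.
  by rewrite big_distrr.
have h0 : (0 < h')%N by lia.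
have A3 : (h' * \sum_(t < h') g (bump 0 t) <= h' * union_value u B)%N.
  by apply: leq_mul => //; apply: leq_trans hsum; exact: leq_addl.
move: A1; rewrite A2 => A1.
have := leq_trans A1 A3; rewrite leq_mul2l ltnn; lia.
Qed.

Lemma dual_eq (T : finType) (indep : {set T} -> bool) (k : nat) (u : T -> nat)
  (l : T -> nat) (j : nat) :
  dual_value indep k u (Ege l j) = (usum u (Elt l j) + k * mrank indep (Ege l j))%N.
Proof.
rewrite /dual_value addnC; congr (_ + _); rewrite /usum; apply: eq_bigl => e.
by rewrite !inE -ltnNge.
Qed.

Local Open Scope ring_scope.

Theorem mainTheorem3 (R : realFieldType) (eps : R) (T : finType)
  (indep : {set T} -> bool) (u : T -> nat) (k : nat)
  (B : 'I_k -> {set T}) (ins : 'I_k -> T -> nat) (l : T -> nat) (h : nat) :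
  0 < eps < 1 ->
  is_matroid indep ->
  (forall i, is_basis indep (B i)) ->
  (forall i e, e \in B i -> (ins i e <= l e)%N) ->
  inv_I1 u B l ->
  inv_I2 indep B ins l ->
  inv_I3 u B l h ->
  eps^-1 + 2 < h%:R ->
  exists j : nat,
    [/\ (usum u (Elt l j) + k * mrank indep (Ege l j))%:R
          <= (1 + eps) * (union_value u B)%:R,
        (forall B' : 'I_k -> {set T}, (forall i, is_basis indep (B' i)) ->
           (union_value u B')%:R <= (1 + eps) * (union_value u B)%:R) &
        (forall S : {set T},
           (dual_value indep k u (Ege l j))%:R
             <= (1 + eps) * (dual_value indep k u S)%:R)].
Proof.
move=> /andP[e0 e1] hM hB hins hI1 hI2 hI3 hh.
have ie0 : 0 < eps^-1 by rewrite invr_gt0.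
have h1 : (1 < h)%N.
  have : (1%:R:R) < h%:R by rewrite (_ : 1%:R = 1) //; lra.
  by rewrite ltr_nat.
have [t [t0 th hg hD]] := main_nat hM hB hins hI1 hI2 hI3 h1.
set G := (\sum_(e | l e == t) minn (u e) (xcount B e))%N in hg hD.
set P := union_value u B in hg hD *.
set D := (usum u (Elt l t.+1) + k * mrank indep (Ege l t.+1))%N in hD *.
have key : D%:R <= (1 + eps) * P%:R.
  have hD' : D%:R <= P%:R + G%:R :> R by rewrite -natrD ler_nat.
  have hg' : (h.-1)%:R * G%:R <= P%:R :> R by rewrite -natrM ler_nat.
  have hH : h%:R = (h.-1)%:R + 1 :> R.
    by rewrite -[in LHS](prednK (ltnW h1)) -addn1 natrD.
  have hie : eps * eps^-1 = 1 by rewrite mulfV // gt_eqF.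
  have G0 : 0 <= G%:R :> R by [].
  set H := (h.-1)%:R in hg' hH.
  have q1 : eps * (H * G%:R) <= eps * P%:R by rewrite ler_wpM2l // ltW.
  have q2 : 0 <= (eps * (H + 1) - 1 - 2 * eps) * G%:R.
    apply: mulr_ge0 => //.
    have : eps * (eps^-1 + 2) < eps * h%:R by rewrite ltr_pM2l.
    rewrite hH mulrDr hie; lra.
  nra.
have hdual : dual_value indep k u (Ege l t.+1) = D by rewrite dual_eq.
exists t.+1; split => //.
- move=> B' hB'; apply: le_trans key.
  by rewrite -hdual ler_nat; apply: weak_duality.
- move=> S; rewrite hdual; apply: (le_trans key).
  rewrite ler_wpM2l //; first lra.
  by rewrite ler_nat; apply: weak_duality.
Qed.
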